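(* Let $c,d\in P$ with $c<d$. Then $(P;{\rm Low})$ has a primitive positive interpretation in $(P;{\rm Cycl},c,d)$.
   Context: $(P;\leq)$ is the random partial order (Fraïssé limit of all finite partial orders); $x<y$ means $x\leq y\wedge x\ne y$; $x\bot y$ means incomparable; $z\bot xy$ abbreviates $z\bot x\wedge z\bot y$. ${\rm Low}(x,y,z):=(x<y\wedge z\bot xy)\vee(x<z\wedge y\bot xz)$; ${\rm Cycl}(x,y,z):=(x<y\wedge y<z)\vee(y<z\wedge z<x)\vee(z<x\wedge x<y)\vee(x<y\wedge z\bot xy)\vee(y<z\wedge x\bot yz)\vee(z<x\wedge y\bot zx)$. $(P;{\rm Cycl},c,d)$ is the expansion by constants $c,d$. A structure $\Delta$ (domain $D$) has a primitive positive interpretation in $\Gamma$ if there are $n\geq1$ and a surjective partial map $I:P^n\to D$ whose domain, the preimage of equality on $D$, and the preimages of the relations of $\Delta$ are definable in $\Gamma$ by primitive positive formulas ($\exists\bar y$ (conjunction of atomic formulas)). *)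

(* Defs.v *)
From Stdlib Require Import List Arith.
Import ListNotations.

Section RandomPoset.
Variable T : Type.
Variable le : T -> T -> Prop.

Definition lt (x y : T) : Prop := le x y /\ x <> y.
Definition incomp (x y : T) : Prop := ~ le x y /\ ~ le y x.

Definition incomp2 (z x y : T) : Prop := incomp z x /\ incomp z y.

Definition Low (x y z : T) : Prop :=
  (lt x y /\ incomp2 z x y) \/ (lt x z /\ incomp2 y x z).

Definition Cycl (x y z : T) : Prop :=
  (lt x y /\ lt y z) \/ (lt y z /\ lt z x) \/ (lt z x /\ lt x y) \/
  (lt x y /\ incomp2 z x y) \/ (lt y z /\ incomp2 x y z) \/
  (lt z x /\ incomp2 y z x).

Definition is_partial_order : Prop :=
  (forall x, le x x) /\
  (forall x y, le x y -> le y x -> x = y) /\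
  (forall x y z, le x y -> le y z -> le x z).

Definition countable : Prop := exists f : nat -> T, forall x, exists i, f i = x.

Definition finite_posets_embed : Prop :=
  forall (n : nat) (R : nat -> nat -> Prop),
    (forall i, i < n -> R i i) ->
    (forall i j, i < n -> j < n -> R i j -> R j i -> i = j) ->
    (forall i j k, i < n -> j < n -> k < n -> R i j -> R j k -> R i k) ->
    exists e : nat -> T,
      (forall i j, i < n -> j < n -> e i = e j -> i = j) /\
      (forall i j, i < n -> j < n -> (R i j <-> le (e i) (e j))).

(** ultrahomogeneity: every isomorphism between finite substructures
    (given as a map f on the finite set of elements of the list s)
    extends to an automorphism. *)
Definition homogeneous : Prop :=
  forall (s : list T) (f : T -> T),
    (forall x y, In x s -> In y s -> f x = f y -> x = y) ->
    (forall x y, In x s -> In y s -> (le x y <-> le (f x) (f y))) ->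
    exists g h : T -> T,
      (forall x, h (g x) = x) /\ (forall x, g (h x) = x) /\
      (forall x y, le x y <-> le (g x) (g y)) /\
      (forall x, In x s -> g x = f x).

(** (T;le) is (isomorphic to) the random partial order: a countable
    homogeneous partial order whose age is the class of all finite posets. *)
Definition random_poset : Prop :=
  is_partial_order /\ countable /\ finite_posets_embed /\ homogeneous.

Variables c d : T.

Inductive term : Type :=
| TVar (i : nat)
| TConstC
| TConstD.

Inductive atom : Type :=
| ACycl (t1 t2 t3 : term)
| AEq (t1 t2 : term).

Definition eval_term (env : list T) (t : term) : option T :=
  match t with
  | TVar i => nth_error env i
  | TConstC => Some c
  | TConstD => Some d
  end.

Definition sat_atom (env : list T) (a : atom) : Prop :=
  match a with
  | ACycl t1 t2 t3 =>
      exists x y z, eval_term env t1 = Some x /\ eval_term env t2 = Some y /\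
                    eval_term env t3 = Some z /\ Cycl x y z
  | AEq t1 t2 =>
      exists x y, eval_term env t1 = Some x /\ eval_term env t2 = Some y /\ x = y
  end.

(** The k-ary relation R (on lists of length k) is defined by the pp-formula
    exists y_0..y_{m-1}. /\ atoms, with free variables x_0..x_{k-1}
    (variable index i < k is x_i, index k + j is y_j). *)
Definition pp_definable (k : nat) (R : list T -> Prop) : Prop :=
  exists (m : nat) (atoms : list atom),
    forall xs, length xs = k ->
      (R xs <-> exists ys, length ys = m /\ Forall (sat_atom (xs ++ ys)) atoms).

(** (T; Low) has a pp-interpretation in (T; Cycl, c, d):
    a partial surjective map I : T^n -> T with pp-definable domain Dom,
    pp-definable preimage of equality and pp-definable preimage of Low. *)
Definition pp_interprets_Low : Prop :=
  exists (n : nat), 1 <= n /\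
  exists (Dom : list T -> Prop) (I : list T -> T),
    pp_definable n Dom /\
    (forall y, exists xs, length xs = n /\ Dom xs /\ I xs = y) /\
    pp_definable (2 * n) (fun zs =>
      Dom (firstn n zs) /\ Dom (skipn n zs) /\
      I (firstn n zs) = I (skipn n zs)) /\
    pp_definable (3 * n) (fun zs =>
      Dom (firstn n zs) /\ Dom (firstn n (skipn n zs)) /\ Dom (skipn (2 * n) zs) /\
      Low (I (firstn n zs)) (I (firstn n (skipn n zs))) (I (skipn (2 * n) zs))).

End RandomPoset.

(* Main.v *)
Require Import Defs.
From Stdlib Require Import List Arith Lia Classical ClassicalEpsilon Bool.
Import ListNotations.
Open Scope bool_scope.

Section Iso.
Variable T : Type.
Variable le : T -> T -> Prop.
Hypothesis HP : random_poset T le.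

Lemma po_refl : forall x, le x x. Proof. apply (proj1 HP). Qed.
Lemma po_anti : forall x y, le x y -> le y x -> x = y. Proof. apply (proj1 HP). Qed.
Lemma po_trans : forall x y z, le x y -> le y z -> le x z. Proof. apply (proj1 HP). Qed.

Definition PI (L : list (T*T)) : Prop :=
  forall p q, In p L -> In q L ->
    (fst p = fst q <-> snd p = snd q) /\ (le (fst p) (fst q) <-> le (snd p) (snd q)).

Definition aut (g : T -> T) : Prop :=
  exists h, (forall x, h (g x) = x) /\ (forall x, g (h x) = x) /\
            (forall x y, le x y <-> le (g x) (g y)).

Lemma aut_inj g : aut g -> forall x y, g x = g y -> x = y.
Proof. intros [h [H1 _]] x y E. rewrite <- (H1 x), <- (H1 y), E. reflexivity. Qed.

Lemma ext_aut : forall L, PI L -> exists g, aut g /\ forall p, In p L -> g (fst p) = snd p.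
Proof.
  intros L HL.
  set (f := fun x => match excluded_middle_informative (exists b, In (x,b) L) with
                     | left H => proj1_sig (constructive_indefinite_description _ H)
                     | right _ => x end).
  assert (Hf : forall p, In p L -> f (fst p) = snd p).
  { intros [a b] Hab. unfold f; simpl.
    destruct (excluded_middle_informative _) as [H|H].
    - destruct (constructive_indefinite_description _ H) as [b' Hb']; simpl.
      destruct (HL (a,b') (a,b) Hb' Hab) as [[E _] _]. simpl in E. apply E; reflexivity.
    - exfalso; apply H; eauto. }
  destruct HP as [_ [_ [_ Hh]]].
  destruct (Hh (map fst L) f) as [g [h [H1 [H2 [H3 H4]]]]].
  - intros x y Hx Hy E. apply in_map_iff in Hx as [p [<- Hp]]. apply in_map_iff in Hy as [q [<- Hq]].
    rewrite !Hf in E by assumption. apply (HL p q Hp Hq); assumption.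
  - intros x y Hx Hy. apply in_map_iff in Hx as [p [<- Hp]]. apply in_map_iff in Hy as [q [<- Hq]].
    rewrite !Hf by assumption. apply (HL p q Hp Hq).
  - exists g. split. exists h. auto.
    intros p Hp. rewrite H4. apply Hf; auto. apply in_map; auto.
Qed.

Definition ltT x y := le x y /\ x <> y.

Lemma aut_lt g : aut g -> forall x y, ltT x y <-> ltT (g x) (g y).
Proof.
  intros Hg x y. pose proof (aut_inj g Hg x y). destruct Hg as [h [_ [_ H3]]].
  unfold ltT. rewrite <- H3. split; intros [A B]; split; auto. intro E; apply B; rewrite E; auto.
Qed.

Lemma lt_trans x y z : ltT x y -> ltT y z -> ltT x z.
Proof.
  intros [A B] [C D]. split. eapply po_trans; eauto.
  intro E; subst. apply B. apply po_anti; auto.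
Qed.

Lemma lt_le_trans x y z : ltT x y -> le y z -> ltT x z.
Proof.
  intros [A B] C. split. eapply po_trans; eauto.
  intro E; subst. apply B. apply po_anti; auto.
Qed.
Lemma le_lt_trans x y z : le x y -> ltT y z -> ltT x z.
Proof.
  intros A [C D]. split. eapply po_trans; eauto.
  intro E; subst. apply D. apply po_anti; auto.
Qed.

Lemma hom1 : forall a b, a = a -> exists g, aut g /\ g b = a.
Proof.
  intros a b _. destruct (ext_aut [(b,a)]) as [g [Hg Hm]].
  - intros p q [<-|[]] [<-|[]]; simpl; split; split; auto; intros; apply po_refl.
  - exists g; split; auto. apply (Hm (b,a)); left; auto.
Qed.

Lemma below1 : forall a, exists e, ltT e a.
Proof.
  intro a. destruct HP as [_ [_ [He _]]].
  destruct (He 2 (fun i j => i <= j)) as [e [Hi Hr]]; try (intros; lia).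
  destruct (hom1 a (e 1) eq_refl) as [g [Hg Hga]].
  exists (g (e 0)). rewrite <- Hga. apply aut_lt; auto. split.
  apply Hr; lia. intro E. apply Hi in E; lia.
Qed.

Lemma above1 : forall a, exists e, ltT a e.
Proof.
  intro a. destruct HP as [_ [_ [He _]]].
  destruct (He 2 (fun i j => i <= j)) as [e [Hi Hr]]; try (intros; lia).
  destruct (hom1 a (e 0) eq_refl) as [g [Hg Hga]].
  exists (g (e 1)). rewrite <- Hga. apply aut_lt; auto. split.
  apply Hr; lia. intro E. apply Hi in E; lia.
Qed.

Definition incompT x y := ~ le x y /\ ~ le y x.

Lemma belowV : forall a b, incompT a b -> exists e, ltT e a /\ ltT e b.
Proof.
  intros a b [Hab Hba]. destruct HP as [_ [_ [He _]]].
  destruct (He 3 (fun i j => i = j \/ i = 0)) as [e [Hi Hr]]; try (intros; lia).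
  destruct (ext_aut [(e 1, a); (e 2, b)]) as [g [Hg Hm]].
  - assert (N : e 1 <> e 2) by (intro E; apply Hi in E; lia).
    assert (Na : a <> b) by (intro E; subst; apply Hab, po_refl).
    assert (L12 : ~ le (e 1) (e 2)) by (intro E; apply Hr in E; lia).
    assert (L21 : ~ le (e 2) (e 1)) by (intro E; apply Hr in E; lia).
    intros p q [<-|[<-|[]]] [<-|[<-|[]]]; simpl; repeat split; intros; try tauto;
      try apply po_refl; try congruence.
  - exists (g (e 0)).
    assert (A : g (e 1) = a) by (apply (Hm (e 1, a)); simpl; auto).
    assert (B : g (e 2) = b) by (apply (Hm (e 2, b)); simpl; auto).
    rewrite <- A, <- B. split; apply aut_lt; auto; split; try (apply Hr; lia);
      intro E; apply Hi in E; lia.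
Qed.

Lemma aboveV : forall a b, incompT a b -> exists e, ltT a e /\ ltT b e.
Proof.
  intros a b [Hab Hba]. destruct HP as [_ [_ [He _]]].
  destruct (He 3 (fun i j => i = j \/ j = 0)) as [e [Hi Hr]]; try (intros; lia).
  destruct (ext_aut [(e 1, a); (e 2, b)]) as [g [Hg Hm]].
  - assert (N : e 1 <> e 2) by (intro E; apply Hi in E; lia).
    assert (Na : a <> b) by (intro E; subst; apply Hab, po_refl).
    assert (L12 : ~ le (e 1) (e 2)) by (intro E; apply Hr in E; lia).
    assert (L21 : ~ le (e 2) (e 1)) by (intro E; apply Hr in E; lia).
    intros p q [<-|[<-|[]]] [<-|[<-|[]]]; simpl; repeat split; intros; try tauto;
      try apply po_refl; try congruence.
  - exists (g (e 0)).
    assert (A : g (e 1) = a) by (apply (Hm (e 1, a)); simpl; auto).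
    assert (B : g (e 2) = b) by (apply (Hm (e 2, b)); simpl; auto).
    rewrite <- A, <- B. split; apply aut_lt; auto; split; try (apply Hr; lia);
      intro E; apply Hi in E; lia.
Qed.

Lemma below2 : forall a b, exists e, ltT e a /\ ltT e b.
Proof.
  intros a b. destruct (classic (le a b)) as [H|H].
  - destruct (below1 a) as [e He]. exists e; split; auto. eapply lt_le_trans; eauto.
  - destruct (classic (le b a)) as [H'|H'].
    + destruct (below1 b) as [e He]. exists e; split; auto. eapply lt_le_trans; eauto.
    + apply belowV. split; auto.
Qed.

Lemma above2 : forall a b, exists e, ltT a e /\ ltT b e.
Proof.
  intros a b. destruct (classic (le a b)) as [H|H].
  - destruct (above1 b) as [e He]. exists e; split; auto. eapply le_lt_trans; eauto.
  - destruct (classic (le b a)) as [H'|H'].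
    + destruct (above1 a) as [e He]. exists e; split; auto. eapply le_lt_trans; eauto.
    + apply aboveV. split; auto.
Qed.

Lemma lbound : forall (l : list T) a, exists e, ltT e a /\ forall x, In x l -> ltT e x.
Proof.
  induction l as [|b l IH]; intro a.
  - destruct (below1 a) as [e He]; exists e; split; auto; intros _ [].
  - destruct (IH a) as [e [Hea He]]. destruct (below2 e b) as [e' [H1 H2]].
    exists e'. split. { apply lt_trans with e; auto. }
    intros x [<-|Hx]; auto. apply lt_trans with e; auto.
Qed.

Lemma ubound : forall (l : list T) a, exists e, ltT a e /\ forall x, In x l -> ltT x e.
Proof.
  induction l as [|b l IH]; intro a.
  - destruct (above1 a) as [e He]; exists e; split; auto; intros _ [].
  - destruct (IH a) as [e [Hea He]]. destruct (above2 e b) as [e' [H1 H2]].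
    exists e'. split. { apply lt_trans with e; auto. }
    intros x [<-|Hx]; auto. apply lt_trans with e; auto.
Qed.

Lemma lt_facts x y : ltT x y -> x <> y /\ y <> x /\ le x y /\ ~ le y x.
Proof.
  intros [A B]. split; [auto|split; [intro E; apply B; congruence|split; [auto|]]].
  intro E. apply B, po_anti; auto.
Qed.

Lemma PI_cons_aut g L u : aut g -> (forall p, In p L -> g (fst p) = snd p) -> PI L ->
  PI ((u, g u) :: L).
Proof.
  intros Hg Hm HL. pose proof (aut_inj g Hg) as Hi. destruct Hg as [h [_ [_ H3]]].
  intros p q Hp Hq.
  destruct Hp as [<-|Hp]; destruct Hq as [<-|Hq]; simpl.
  - split; split; intros; auto; apply po_refl.
  - rewrite <- (Hm q Hq). split; [split; intro E; [rewrite E; auto| apply Hi; auto] | apply H3].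
  - rewrite <- (Hm p Hp). split; [split; intro E; [rewrite E; auto| apply Hi; auto] | apply H3].
  - apply HL; auto.
Qed.

Definition swp (p : T*T) := (snd p, fst p).

Lemma PI_swap L : PI L -> PI (map swp L).
Proof.
  intros HL p q Hp Hq. apply in_map_iff in Hp as [p' [<- Hp]].
  apply in_map_iff in Hq as [q' [<- Hq]]. simpl.
  destruct (HL p' q' Hp Hq) as [A B]. split; symmetry; auto.
Qed.

Lemma map_swp_swp L : map swp (map swp L) = L.
Proof. induction L as [|[a b] L IH]; simpl; auto. rewrite IH; auto. Qed.

Variables c d : T.
Hypothesis Hcd : ltT c d.
Definition InS x := ltT c x /\ ltT x d.
Definition AllS (L : list (T*T)) := forall p, In p L -> InS (fst p).

Lemma forth_ex L u : PI L -> InS u -> exists v, PI ((u,v)::L).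
Proof.
  intros HL Hu. destruct (ext_aut L HL) as [g [Hg Hm]].
  exists (g u). apply PI_cons_aut; auto.
Qed.

Lemma back_ex L v : PI L -> AllS L -> exists u, InS u /\ PI ((u,v)::L).
Proof.
  intros HL HS.
  destruct (lbound (map snd L) v) as [c' [Hc'v Hc']].
  destruct (ubound (map snd L) v) as [d' [Hd'v Hd']].
  assert (Hcd' : ltT c' d') by (apply lt_trans with v; auto).
  assert (HM : PI ((c',c)::(d',d)::map swp L)).
  { assert (Hb : forall q, In q (map swp L) -> ltT c' (fst q) /\ ltT (fst q) d' /\ ltT c (snd q) /\ ltT (snd q) d).
    { intros q Hq. apply in_map_iff in Hq as [[a b] [<- Hq]]. simpl.
      assert (Hb : In b (map snd L)) by (apply in_map_iff; exists (a,b); auto).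
      destruct (HS _ Hq) as [H1 H2]. simpl in H1, H2. split; [|split; [|split]]; auto. }
    pose proof (PI_swap L HL) as HL'.
    intros p q Hp Hq.
    destruct Hp as [<-|[<-|Hp]]; destruct Hq as [<-|[<-|Hq]]; simpl;
    try (apply HL'; auto);
    try (split; split; auto; fail);
    repeat match goal with
    | H : In _ (map swp L) |- _ => apply Hb in H; destruct H as [? [? [? ?]]]
    end;
    repeat match goal with
    | H : ltT _ _ |- _ => apply lt_facts in H; destruct H as [? [? [? ?]]]
    end;
    split; split; intro; try tauto; try congruence; apply po_refl. }
  destruct (ext_aut _ HM) as [h [Hh Hm]].
  exists (h v). split.
  - assert (E1 : h c' = c) by (apply (Hm (c',c)); simpl; auto).
    assert (E2 : h d' = d) by (apply (Hm (d',d)); simpl; auto).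
    split; [rewrite <- E1 | rewrite <- E2]; apply aut_lt; auto.
  - rewrite <- (map_swp_swp ((h v, v) :: L)). apply PI_swap. simpl.
    apply PI_cons_aut; auto. intros p Hp. apply Hm. simpl; auto.
    apply PI_swap; auto.
Qed.

Definition forth (L : list (T*T)) (u : T) : list (T*T) :=
  match excluded_middle_informative
          (exists v, InS u /\ ~ In u (map fst L) /\ PI ((u,v)::L)) with
  | left H => (u, proj1_sig (constructive_indefinite_description _ H)) :: L
  | right _ => L
  end.

Definition back (L : list (T*T)) (v : T) : list (T*T) :=
  match excluded_middle_informative
          (exists u, InS u /\ ~ In v (map snd L) /\ PI ((u,v)::L)) with
  | left H => (proj1_sig (constructive_indefinite_description _ H), v) :: L
  | right _ => L
  end.

Definition Good L := PI L /\ AllS L.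

Lemma forth_good L u : Good L -> Good (forth L u) /\ incl L (forth L u) /\
  (InS u -> In u (map fst (forth L u))).
Proof.
  intros [HL HS]. unfold forth. destruct (excluded_middle_informative _) as [H|H].
  - destruct (constructive_indefinite_description _ H) as [v [Hu [Hn Hv]]]; simpl.
    split; [split|split].
    + auto.
    + intros p [<-|Hp]; auto.
    + intros p Hp; right; auto.
    + intros _; left; auto.
  - split; [split; auto|split]. intros p Hp; auto.
    intros Hu. destruct (classic (In u (map fst L))) as [Hi|Hi]; auto.
    exfalso. destruct (forth_ex L u HL Hu) as [v Hv]. apply H. exists v. auto.
Qed.

Lemma back_good L v : Good L -> Good (back L v) /\ incl L (back L v) /\
  In v (map snd (back L v)).
Proof.
  intros [HL HS]. unfold back. destruct (excluded_middle_informative _) as [H|H].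
  - destruct (constructive_indefinite_description _ H) as [u [Hu [Hn Hv]]]; simpl.
    split; [split|split].
    + auto.
    + intros p [<-|Hp]; auto.
    + intros p Hp; right; auto.
    + left; auto.
  - split; [split; auto|split]. intros p Hp; auto.
    destruct (classic (In v (map snd L))) as [Hi|Hi]; auto.
    exfalso. destruct (back_ex L v HL HS) as [u [Hu Hv]]. apply H. exists u. auto.
Qed.

Variable fe : nat -> T.
Hypothesis Hfe : forall x, exists i, fe i = x.

Fixpoint Ls (k : nat) : list (T*T) :=
  match k with
  | O => []
  | Datatypes.S k => back (forth (Ls k) (fe k)) (fe k)
  end.

Lemma Ls_good k : Good (Ls k).
Proof.
  induction k; simpl.
  - split; intros p q; simpl; tauto.
  - apply back_good, forth_good; auto.
Qed.

Lemma Ls_step k : incl (Ls k) (Ls (Datatypes.S k)).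
Proof.
  simpl. intros p Hp. apply back_good. apply forth_good; auto. apply Ls_good.
  apply forth_good; auto. apply Ls_good.
Qed.

Lemma Ls_mono k m : k <= m -> incl (Ls k) (Ls m).
Proof.
  induction 1. intros p; auto. intros p Hp. apply Ls_step; auto.
Qed.

Lemma Ls_fst u : InS u -> exists k v, In (u,v) (Ls k).
Proof.
  intros Hu. destruct (Hfe u) as [i <-]. exists (Datatypes.S i).
  assert (H : In (fe i) (map fst (forth (Ls i) (fe i)))).
  { apply forth_good; auto. apply Ls_good. }
  apply in_map_iff in H as [[a b] [Ha Hab]]. simpl in Ha; subst. exists b.
  simpl. apply back_good; auto. apply forth_good, Ls_good.
Qed.

Lemma Ls_snd v : exists k u, In (u,v) (Ls k).
Proof.
  destruct (Hfe v) as [i <-]. exists (Datatypes.S i).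
  assert (H : In (fe i) (map snd (Ls (Datatypes.S i)))).
  { simpl. apply back_good. apply forth_good, Ls_good. }
  apply in_map_iff in H as [[a b] [Ha Hab]]. simpl in Ha; subst. exists a. auto.
Qed.

Definition Iso (x : T) : T :=
  match excluded_middle_informative (exists v k, In (x,v) (Ls k)) with
  | left H => proj1_sig (constructive_indefinite_description _ H)
  | right _ => x
  end.

Lemma Iso_spec x : InS x -> exists k, In (x, Iso x) (Ls k).
Proof.
  intros Hx. unfold Iso. destruct (excluded_middle_informative _) as [H|H].
  - destruct (constructive_indefinite_description _ H) as [v Hv]; simpl; auto.
  - exfalso. destruct (Ls_fst x Hx) as [k [v Hv]]. apply H; eauto.
Qed.

Lemma Iso_pres x y : InS x -> InS y ->
  (x = y <-> Iso x = Iso y) /\ (le x y <-> le (Iso x) (Iso y)).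
Proof.
  intros Hx Hy. destruct (Iso_spec x Hx) as [k1 H1]. destruct (Iso_spec y Hy) as [k2 H2].
  destruct (Ls_good (max k1 k2)) as [HL _].
  apply (HL (x, Iso x) (y, Iso y)); [apply (Ls_mono k1 (max k1 k2))|apply (Ls_mono k2 (max k1 k2))]; auto; lia.
Qed.

Lemma Iso_surj y : exists x, InS x /\ Iso x = y.
Proof.
  destruct (Ls_snd y) as [k [u Hu]].
  assert (Hs : InS u) by (apply ((proj2 (Ls_good k)) (u,y)); auto).
  exists u. split; auto. destruct (Iso_spec u Hs) as [k2 H2].
  destruct (Ls_good (max k k2)) as [HL _].
  apply (HL (u, Iso u) (u, y)); [apply (Ls_mono k2 (max k k2))|apply (Ls_mono k (max k k2))| ]; auto; lia.
Qed.
End Iso.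


Section Refl.
Variable T : Type.
Variable le : T -> T -> Prop.
Hypothesis Hrefl : forall x, le x x.
Hypothesis Hanti : forall x y, le x y -> le y x -> x = y.
Hypothesis Htrans : forall x y z, le x y -> le y z -> le x z.

Inductive pfact := FLe (i j : nat) | FNle (i j : nat) | FNeq (i j : nat).

Variable env : nat -> T.

Definition holds (f : pfact) : Prop :=
  match f with
  | FLe i j => le (env i) (env j)
  | FNle i j => ~ le (env i) (env j)
  | FNeq i j => env i <> env j
  end.

Definition memp (p : nat*nat) (L : list (nat*nat)) : bool :=
  existsb (fun q => (fst p =? fst q) && (snd p =? snd q)) L.

Definition addp (p : nat*nat) (L : list (nat*nat)) := if memp p L then L else p :: L.

Definition compose (L : list (nat*nat)) : list (nat*nat) :=
  flat_map (fun p => map (fun q => (fst p, snd q)) (filter (fun q => snd p =? fst q) L)) L.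

Definition stepc (L : list (nat*nat)) := fold_right addp L (compose L).

Fixpoint closure (fuel : nat) (L : list (nat*nat)) :=
  match fuel with O => L | S f => closure f (stepc L) end.

Definition les (fs : list pfact) : list (nat*nat) :=
  flat_map (fun f => match f with FLe i j => [(i,j)] | _ => [] end) fs.

Definition inb (x : nat) (l : list nat) := existsb (Nat.eqb x) l.

Definition expand (E : list (nat*nat)) (vis : list nat) : list nat :=
  fold_right (fun e acc => if inb (fst e) vis then (if inb (snd e) acc then acc else snd e :: acc) else acc) vis E.

Fixpoint reachset (f : nat) (E : list (nat*nat)) (vis : list nat) : list nat :=
  match f with O => vis | S f' => reachset f' E (expand E vis) end.

Definition reach (E : list (nat*nat)) (i j : nat) : bool := inb j (reachset 12 E [i]).

Definition contra (fs : list pfact) : bool :=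
  let E := les fs in
  existsb (fun f => match f with
                    | FNle i j => reach E i j
                    | FNeq i j => (i =? j) || (reach E i j && reach E j i)
                    | FLe _ _ => false end) fs.

Definition GoodL (L : list (nat*nat)) := forall p, In p L -> le (env (fst p)) (env (snd p)).

Lemma memp_In p L : memp p L = true -> In p L.
Proof.
  unfold memp. intro H. apply existsb_exists in H as [q [Hq E]].
  apply andb_true_iff in E as [E1 E2]. apply Nat.eqb_eq in E1, E2.
  destruct p, q; simpl in *; subst; auto.
Qed.

Lemma addp_good p L : le (env (fst p)) (env (snd p)) -> GoodL L -> GoodL (addp p L).
Proof. unfold addp. destruct (memp p L); auto. intros H HL q [<-|Hq]; auto. Qed.

Lemma compose_good L : GoodL L -> GoodL (compose L).
Proof.
  intros HL q Hq. unfold compose in Hq. apply in_flat_map in Hq as [p [Hp Hq]].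
  apply in_map_iff in Hq as [r [<- Hr]]. apply filter_In in Hr as [Hr E].
  apply Nat.eqb_eq in E. simpl. apply Htrans with (env (snd p)).
  apply HL; auto. rewrite E. apply HL; auto.
Qed.

Lemma stepc_good L : GoodL L -> GoodL (stepc L).
Proof.
  intros HL. unfold stepc. pose proof (compose_good L HL) as HC.
  induction (compose L) as [|p C IH]; simpl; auto.
  apply addp_good. apply HC; left; auto. apply IH. intros q Hq; apply HC; right; auto.
Qed.

Lemma closure_good f L : GoodL L -> GoodL (closure f L).
Proof. revert L; induction f; simpl; auto. intros L HL. apply IHf, stepc_good; auto. Qed.

Lemma les_good fs : Forall holds fs -> GoodL (les fs).
Proof.
  intros H p Hp. unfold les in Hp. apply in_flat_map in Hp as [f [Hf Hp]].
  rewrite Forall_forall in H. specialize (H f Hf).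
  destruct f; simpl in Hp; try tauto. destruct Hp as [<-|[]]. exact H.
Qed.

Lemma inb_In x l : inb x l = true -> In x l.
Proof. unfold inb. intro H. apply existsb_exists in H as [y [Hy E]]. apply Nat.eqb_eq in E; subst; auto. Qed.

Lemma expand_good E i vis : GoodL E -> (forall y, In y vis -> le (env i) (env y)) ->
  forall y, In y (expand E vis) -> le (env i) (env y).
Proof.
  intros HE Hv. unfold expand. induction E as [|e E IH]; simpl; auto.
  assert (HE' : GoodL E) by (intros p Hp; apply HE; right; auto).
  specialize (IH HE').
  destruct (inb (fst e) vis) eqn:E1; auto.
  destruct (inb (snd e) _); auto.
  intros y [<-|Hy]; auto. apply Htrans with (env (fst e)).
  apply Hv, inb_In; auto. apply (HE e); left; auto.
Qed.

Lemma reachset_good f E i vis : GoodL E -> (forall y, In y vis -> le (env i) (env y)) ->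
  forall y, In y (reachset f E vis) -> le (env i) (env y).
Proof.
  revert vis; induction f; simpl; intros vis HE Hv; auto.
  apply IHf; auto. apply expand_good; auto.
Qed.

Lemma reach_sound E i j : GoodL E -> reach E i j = true -> le (env i) (env j).
Proof.
  intros HE H. unfold reach in H. apply inb_In in H.
  eapply reachset_good; eauto. intros y [<-|[]]; auto.
Qed.

Lemma contra_sound fs : contra fs = true -> Forall holds fs -> False.
Proof.
  intros Hc Hf. unfold contra in Hc.
  pose proof (les_good fs Hf) as HR.
  apply existsb_exists in Hc as [f [Hin Hf']].
  rewrite Forall_forall in Hf. specialize (Hf f Hin).
  destruct f as [i j|i j|i j]; simpl in *.
  - discriminate.
  - apply Hf. eapply reach_sound; eauto.
  - apply orb_true_iff in Hf' as [E|E].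
    + apply Nat.eqb_eq in E; subst. apply Hf; auto.
    + apply andb_true_iff in E as [E1 E2]. apply Hf. apply Hanti; eapply reach_sound; eauto.
Qed.

Lemma fa_app (P : pfact -> Prop) l1 l2 : Forall P l1 -> Forall P l2 -> Forall P (l1 ++ l2).
Proof. intros; apply Forall_app; auto. Qed.

Definition flt a b := [FLe a b; FNeq a b].
Definition finc a b := [FNle a b; FNle b a].
Definition finc2 z a b := finc z a ++ finc z b.

Definition ccases (t : nat*nat*nat) : list (list pfact) :=
  let '(i,j,k) := t in
  [flt i j ++ flt j k; flt j k ++ flt k i; flt k i ++ flt i j;
   flt i j ++ finc2 k i j; flt j k ++ finc2 i j k; flt k i ++ finc2 j k i].

Definition catom (t : nat*nat*nat) : Prop :=
  let '(i,j,k) := t in Cycl T le (env i) (env j) (env k).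

Lemma flt_ok a b : lt T le (env a) (env b) -> Forall holds (flt a b).
Proof. intros [H1 H2]. repeat constructor; auto. Qed.
Lemma finc_ok a b : incomp T le (env a) (env b) -> Forall holds (finc a b).
Proof. intros [H1 H2]. repeat constructor; auto. Qed.
Lemma finc2_ok z a b : incomp2 T le (env z) (env a) (env b) -> Forall holds (finc2 z a b).
Proof. intros [H1 H2]. apply fa_app; apply finc_ok; auto. Qed.

Lemma ccases_sound t : catom t -> exists fs, In fs (ccases t) /\ Forall holds fs.
Proof.
  destruct t as [[i j] k]. simpl.
  intros [[A B]|[[A B]|[[A B]|[[A B]|[[A B]|[A B]]]]]].
  - exists (flt i j ++ flt j k); split; [left; reflexivity|]. apply fa_app; apply flt_ok; auto.
  - exists (flt j k ++ flt k i); split; [right; left; reflexivity|]. apply fa_app; apply flt_ok; auto.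
  - exists (flt k i ++ flt i j); split; [do 2 right; left; reflexivity|]. apply fa_app; apply flt_ok; auto.
  - exists (flt i j ++ finc2 k i j); split; [do 3 right; left; reflexivity|]. apply fa_app; [apply flt_ok|apply finc2_ok]; auto.
  - exists (flt j k ++ finc2 i j k); split; [do 4 right; left; reflexivity|]. apply fa_app; [apply flt_ok|apply finc2_ok]; auto.
  - exists (flt k i ++ finc2 j k i); split; [do 5 right; left; reflexivity|]. apply fa_app; [apply flt_ok|apply finc2_ok]; auto.
Qed.

Fixpoint refute (fs : list pfact) (atoms : list (nat*nat*nat)) : bool :=
  if contra fs then true else
  match atoms with
  | [] => false
  | a :: rest => forallb (fun fs' => refute (fs' ++ fs) rest) (ccases a)
  end.

Lemma refute_sound atoms : forall fs, refute fs atoms = true -> Forall holds fs ->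
  Forall catom atoms -> False.
Proof.
  induction atoms as [|a rest IH]; intros fs Hr Hf Ha; simpl in Hr.
  - destruct (contra fs) eqn:Ec; [|discriminate]. eapply contra_sound; eauto.
  - destruct (contra fs) eqn:Ec. eapply contra_sound; eauto.
    inversion Ha as [|? ? Ha1 Ha2]; subst.
    destruct (ccases_sound a Ha1) as [fs' [Hin Hfs']].
    rewrite forallb_forall in Hr. apply (IH (fs' ++ fs)); auto.
    apply fa_app; auto.
Qed.
End Refl.


Section Emb.
Variable T : Type.
Variable le : T -> T -> Prop.
Hypothesis HP : random_poset T le.

Definition Rb (Rl : list (nat*nat)) (i j : nat) : bool := (i =? j) || memp (i,j) Rl.

Definition po_ok (n : nat) (Rl : list (nat*nat)) : bool :=
  forallb (fun i => forallb (fun j =>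
     (negb (Rb Rl i j && Rb Rl j i) || (i =? j)) &&
     forallb (fun k => negb (Rb Rl i j && Rb Rl j k) || Rb Rl i k) (seq 0 n)) (seq 0 n)) (seq 0 n).

Definition ltb Rl i j := Rb Rl i j && negb (i =? j).
Definition incb Rl i j := negb (Rb Rl i j) && negb (Rb Rl j i).
Definition cyclb Rl i j k :=
  (ltb Rl i j && ltb Rl j k) || (ltb Rl j k && ltb Rl k i) || (ltb Rl k i && ltb Rl i j) ||
  (ltb Rl i j && incb Rl k i && incb Rl k j) || (ltb Rl j k && incb Rl i j && incb Rl i k) ||
  (ltb Rl k i && incb Rl j k && incb Rl j i).

Lemma in_seq0 n i : i < n -> In i (seq 0 n).
Proof. intro; apply in_seq; lia. Qed.

Lemma po_ok_sound n Rl : po_ok n Rl = true ->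
  (forall i j, i < n -> j < n -> Rb Rl i j = true -> Rb Rl j i = true -> i = j) /\
  (forall i j k, i < n -> j < n -> k < n -> Rb Rl i j = true -> Rb Rl j k = true -> Rb Rl i k = true).
Proof.
  unfold po_ok. intro H. rewrite forallb_forall in H. split.
  - intros i j Hi Hj H1 H2. specialize (H i (in_seq0 _ _ Hi)). rewrite forallb_forall in H.
    specialize (H j (in_seq0 _ _ Hj)). apply andb_true_iff in H as [H _].
    rewrite H1, H2 in H. simpl in H. apply Nat.eqb_eq; auto.
  - intros i j k Hi Hj Hk H1 H2. specialize (H i (in_seq0 _ _ Hi)). rewrite forallb_forall in H.
    specialize (H j (in_seq0 _ _ Hj)). apply andb_true_iff in H as [_ H].
    rewrite forallb_forall in H. specialize (H k (in_seq0 _ _ Hk)).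
    rewrite H1, H2 in H. simpl in H. auto.
Qed.

Lemma Rb_refl Rl i : Rb Rl i i = true.
Proof. unfold Rb. rewrite Nat.eqb_refl. auto. Qed.

Section WithE.
Variable n : nat.
Variable Rl : list (nat*nat).
Variable e : nat -> T.
Hypothesis Hinj : forall i j, i < n -> j < n -> e i = e j -> i = j.
Hypothesis Hle : forall i j, i < n -> j < n -> (Rb Rl i j = true <-> le (e i) (e j)).

Lemma ltb_ok i j : i < n -> j < n -> ltb Rl i j = true -> lt T le (e i) (e j).
Proof.
  unfold ltb. intros Hi Hj H. apply andb_true_iff in H as [H1 H2]. split.
  apply Hle; auto. intro E. apply Hinj in E; auto. subst. rewrite Nat.eqb_refl in H2. discriminate.
Qed.
Lemma incb_ok i j : i < n -> j < n -> incb Rl i j = true -> incomp T le (e i) (e j).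
Proof.
  unfold incb. intros Hi Hj H. apply andb_true_iff in H as [H1 H2]. split; intro E.
  apply Hle in E; auto. rewrite E in H1; discriminate.
  apply Hle in E; auto. rewrite E in H2; discriminate.
Qed.
Lemma cyclb_ok i j k : i < n -> j < n -> k < n -> cyclb Rl i j k = true -> Cycl T le (e i) (e j) (e k).
Proof.
  intros Hi Hj Hk H. unfold cyclb in H. unfold Cycl, incomp2.
  repeat match goal with H : orb _ _ = true |- _ => apply orb_true_iff in H as [H|H] end;
  repeat match goal with H : andb _ _ = true |- _ => apply andb_true_iff in H as [H ?] end;
  repeat match goal with
  | H : ltb Rl ?a ?b = true |- _ => apply ltb_ok in H; [|lia|lia]
  | H : incb Rl ?a ?b = true |- _ => apply incb_ok in H; [|lia|lia]
  end; tauto.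
Qed.
End WithE.

Lemma Cycl_aut g a b c0 : aut T le g -> Cycl T le a b c0 -> Cycl T le (g a) (g b) (g c0).
Proof.
  intros Hg. pose proof (aut_inj T le g Hg) as Hi.
  destruct Hg as [h [_ [_ H3]]].
  assert (L : forall x y, lt T le x y -> lt T le (g x) (g y)).
  { intros x y [A B]; split. apply (proj1 (H3 x y)); auto. intro E; apply B, Hi; auto. }
  assert (I : forall x y, incomp T le x y -> incomp T le (g x) (g y)).
  { intros x y [A B]; split; intro E; [apply A; apply (proj2 (H3 x y))|apply B; apply (proj2 (H3 y x))]; auto. }
  unfold Cycl, incomp2.
  intros [[A B]|[[A B]|[[A B]|[[A [B C]]|[[A [B C]]|[A [B C]]]]]]];
  [left|right;left|right;right;left|right;right;right;left|do 4 right;left|do 5 right];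
  repeat match goal with |- _ /\ _ => split end; auto.
Qed.

Definition atoms_ok n Rl (atoms : list (nat*nat*nat)) : bool :=
  forallb (fun t => let '(i,j,k) := t in (i <? n) && (j <? n) && (k <? n) && cyclb Rl i j k) atoms.

Lemma realize (c0 : T) (n : nat) (Rl : list (nat*nat)) (bl : list T) (atoms : list (nat*nat*nat)) :
  po_ok n Rl = true -> length bl <= n ->
  (forall i j, i < length bl -> j < length bl -> (Rb Rl i j = true <-> le (nth i bl c0) (nth j bl c0))) ->
  (forall i j, i < length bl -> j < length bl -> nth i bl c0 = nth j bl c0 -> i = j) ->
  atoms_ok n Rl atoms = true ->
  exists g : nat -> T, (forall i, i < length bl -> g i = nth i bl c0) /\ Forall (catom T le g) atoms.
Proof.
  intros Hpo Hlen Hb Hbi Ha.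
  destruct (po_ok_sound n Rl Hpo) as [Has Htr].
  destruct HP as [_ [_ [He _]]].
  destruct (He n (fun i j => Rb Rl i j = true)) as [e [Hinj Hle]].
  - intros; apply Rb_refl.
  - intros; eauto.
  - intros; eauto.
  - set (L := map (fun i => (e i, nth i bl c0)) (seq 0 (length bl))).
    assert (HL : PI T le L).
    { intros p q Hp Hq. unfold L in Hp, Hq.
      apply in_map_iff in Hp as [i [<- Hi]]. apply in_map_iff in Hq as [j [<- Hj]].
      apply in_seq in Hi, Hj. simpl. split.
      - split; intro E.
        + apply Hinj in E; try lia. subst; auto.
        + apply Hbi in E; try lia. subst; auto.
      - rewrite <- Hle by lia. apply Hb; lia. }
    destruct (ext_aut T le HP L HL) as [g [Hg Hm]].
    exists (fun i => g (e i)). split.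
    + intros i Hi. apply (Hm (e i, nth i bl c0)). unfold L. apply in_map_iff.
      exists i; split; auto. apply in_seq; lia.
    + unfold atoms_ok in Ha. rewrite forallb_forall in Ha. apply Forall_forall.
      intros [[i j] k] Ht. specialize (Ha _ Ht). simpl in Ha.
      repeat (apply andb_true_iff in Ha as [Ha ?]). apply Nat.ltb_lt in Ha.
      repeat match goal with H : (_ <? _) = true |- _ => apply Nat.ltb_lt in H end.
      simpl. apply Cycl_aut; auto. apply (cyclb_ok n Rl e Hinj Hle); auto.
Qed.
End Emb.


Definition bcheck (m : nat) (Rl : list (nat*nat)) (bf : list pfact) : bool :=
  forallb (fun i => forallb (fun j =>
    (if Rb Rl i j then (i =? j) || reach (les bf) i j else contra (FLe i j :: bf)) &&
    ((i =? j) || contra (FLe i j :: FLe j i :: bf))) (seq 0 m)) (seq 0 m).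

Section Main.
Variable T : Type.
Variable le : T -> T -> Prop.
Hypothesis HP : random_poset T le.

Lemma Prefl : forall x, le x x. Proof. apply (proj1 HP). Qed.
Lemma Panti : forall x y, le x y -> le y x -> x = y. Proof. apply (proj1 HP). Qed.
Lemma Ptrans : forall x y z, le x y -> le y z -> le x z. Proof. apply (proj1 HP). Qed.

Lemma bcheck_sound (bl : list T) c0 Rl bf :
  bcheck (length bl) Rl bf = true -> Forall (holds T le (fun i => nth i bl c0)) bf ->
  (forall i j, i < length bl -> j < length bl -> (Rb Rl i j = true <-> le (nth i bl c0) (nth j bl c0))) /\
  (forall i j, i < length bl -> j < length bl -> nth i bl c0 = nth j bl c0 -> i = j).
Proof.
  intros Hb Hf. unfold bcheck in Hb. rewrite forallb_forall in Hb.
  assert (H : forall i j, i < length bl -> j < length bl ->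
     (if Rb Rl i j then (i =? j) || reach (les bf) i j else contra (FLe i j :: bf)) = true /\
     ((i =? j) || contra (FLe i j :: FLe j i :: bf)) = true).
  { intros i j Hi Hj. specialize (Hb i (in_seq0 _ _ Hi)). rewrite forallb_forall in Hb.
    specialize (Hb j (in_seq0 _ _ Hj)). apply andb_true_iff in Hb; auto. }
  split.
  - intros i j Hi Hj. destruct (H i j Hi Hj) as [H1 _].
    destruct (Rb Rl i j) eqn:E; split; intro K; try discriminate; auto.
    + apply orb_true_iff in H1 as [H1|H1]. apply Nat.eqb_eq in H1; subst; apply Prefl.
      apply (reach_sound T le Prefl Ptrans (fun k => nth k bl c0) (les bf) i j); auto. apply les_good; auto.
    + exfalso. apply (contra_sound T le Prefl Panti Ptrans (fun k => nth k bl c0) (FLe i j :: bf)); auto.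
  - intros i j Hi Hj E. destruct (H i j Hi Hj) as [_ H2].
    apply orb_true_iff in H2 as [H2|H2]. apply Nat.eqb_eq; auto.
    exfalso. apply (contra_sound T le Prefl Panti Ptrans (fun k => nth k bl c0) _ H2).
    constructor; [|constructor]; simpl; auto; rewrite E; apply Prefl.
Qed.
End Main.

Definition atS := [(0,2,1);(0,3,1);(0,4,1)].
Definition atG := [(0,6,3);(0,6,5);(0,7,4);(0,7,5);(1,5,3);(1,5,4);(3,7,5);(3,7,6);(4,6,5);(4,6,7)].
Definition atP := [(3,10,4);(0,2,10);(0,3,10);(2,3,8);(2,10,8);(8,9,10);(3,8,9);(4,9,10);(2,4,9);(1,9,2);(1,9,3)].
Definition atomsL := atS ++ atG ++ atP.
Definition baseS := flt 0 1 ++ flt 0 2 ++ flt 2 1 ++ flt 0 3 ++ flt 3 1 ++ flt 0 4 ++ flt 4 1.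
Definition RA := [(0,1);(0,2);(0,3);(0,4);(0,6);(0,7);(2,1);(2,3);(3,1);(4,1);(5,1);(5,3);(5,4);(6,1);(6,3);(7,1);(7,4);(9,1);(9,2);(9,3);(10,1);(10,4);(10,8)].
Definition RB := [(0,1);(0,2);(0,3);(0,4);(0,6);(0,7);(2,1);(2,4);(3,1);(4,1);(5,1);(5,3);(5,4);(6,1);(6,3);(7,1);(7,4);(8,1);(8,2);(8,4);(8,9);(10,1);(10,4)].
Definition bfA := baseS ++ flt 2 3 ++ finc 4 2 ++ finc 4 3.
Definition bfB := baseS ++ flt 2 4 ++ finc 3 2 ++ finc 3 4.

Lemma checks_ok : po_ok 11 RA = true /\ po_ok 11 RB = true /\ atoms_ok 11 RA atomsL = true /\
  atoms_ok 11 RB atomsL = true /\ bcheck 5 RA bfA = true /\ bcheck 5 RB bfB = true.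
Proof. vm_compute. repeat split. Qed.

Lemma refG1 : refute (FLe 3 4 :: baseS) atG = true. Proof. vm_compute. reflexivity. Qed.
Lemma refG2 : refute (FLe 4 3 :: baseS) atG = true. Proof. vm_compute. reflexivity. Qed.

Definition relF (a b : nat) : list (list pfact) := [flt a b; flt b a; [FLe a b; FLe b a]; finc a b].

Lemma refP : forall i1 i2, i1 < 4 -> i2 < 4 -> ~(i1 = 0 /\ i2 = 3) -> ~(i1 = 3 /\ i2 = 0) ->
  refute (nth i1 (relF 2 3) [] ++ nth i2 (relF 2 4) [] ++ finc 3 4 ++ baseS) atP = true.
Proof.
  intros i1 i2 H1 H2 H3 H4.
  destruct i1 as [|[|[|[|]]]]; destruct i2 as [|[|[|[|]]]]; try lia; vm_compute; reflexivity.
Qed.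

Section Main2.
Variable T : Type.
Variable le : T -> T -> Prop.
Hypothesis HP : random_poset T le.
Variables c d : T.
Hypothesis Hcd : lt T le c d.

Notation Pr := (Prefl T le HP).
Notation Pa := (Panti T le HP).
Notation Pt := (Ptrans T le HP).

Lemma lt_neq' a b : lt T le a b -> a <> b. Proof. intros [_ H]; auto. Qed.

Lemma cycl_S x : Cycl T le c x d <-> lt T le c x /\ lt T le x d.
Proof.
  split.
  - intro H. destruct Hcd as [H1 H2].
    assert (N : ~ le d c) by (intro E; apply H2, Pa; auto).
    unfold Cycl, incomp2, incomp, lt in H |- *.
    destruct H as [H|[H|[H|[H|[H|H]]]]]; tauto.
  - intro H. left. auto.
Qed.

Lemma rel_idx (env : nat -> T) ia ib : exists i, i < 4 /\ Forall (holds T le env) (nth i (relF ia ib) []) /\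
  (i = 0 -> lt T le (env ia) (env ib)) /\ (i = 3 -> incomp T le (env ia) (env ib)).
Proof.
  destruct (classic (le (env ia) (env ib))) as [H1|H1];
  destruct (classic (le (env ib) (env ia))) as [H2|H2].
  - exists 2. split; [lia|]. split; [repeat constructor; auto|]. split; intro; lia.
  - exists 0. assert (N : env ia <> env ib) by (intro E; apply H2; rewrite E; apply Pr).
    split; [lia|]. split; [repeat constructor; auto|]. split; intro; [split; auto|lia].
  - exists 1. assert (N : env ib <> env ia) by (intro E; apply H1; rewrite E; apply Pr).
    split; [lia|]. split; [repeat constructor; auto|]. split; intro; lia.
  - exists 3. split; [lia|]. split; [repeat constructor; auto|]. split; intro; [lia|split; auto].
Qed.

Definition envl (l : list T) (i : nat) : T := nth i (c :: d :: l) c.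

Lemma sound x y z ws : Forall (catom T le (envl (x :: y :: z :: ws))) atomsL ->
  Low T le x y z.
Proof.
  set (env := envl (x :: y :: z :: ws)). intro H.
  unfold atomsL in H. apply Forall_app in H as [HS H]. apply Forall_app in H as [HG HPh].
  inversion HS as [|? ? Hx HS1]; subst. inversion HS1 as [|? ? Hy HS2]; subst.
  inversion HS2 as [|? ? Hz _]; subst.
  simpl in Hx, Hy, Hz. apply cycl_S in Hx, Hy, Hz.
  assert (Hb : Forall (holds T le env) baseS).
  { unfold baseS. repeat apply fa_app; apply flt_ok; unfold env, envl; simpl; tauto. }
  assert (Hyz : incomp T le y z).
  { split; intro K.
    - apply (refute_sound T le Pr Pa Pt env atG (FLe 3 4 :: baseS) refG1); auto.
    - apply (refute_sound T le Pr Pa Pt env atG (FLe 4 3 :: baseS) refG2); auto. }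
  destruct (rel_idx env 2 3) as [i1 [Hi1 [F1 [A1 B1]]]].
  destruct (rel_idx env 2 4) as [i2 [Hi2 [F2 [A2 B2]]]].
  destruct (classic (i1 = 0 /\ i2 = 3)) as [[E1 E2]|N1].
  { left. specialize (A1 E1); specialize (B2 E2). simpl in A1, B2.
    destruct B2, Hyz. split; [exact A1|split; split; auto]. }
  destruct (classic (i1 = 3 /\ i2 = 0)) as [[E1 E2]|N2].
  { right. specialize (A2 E2); specialize (B1 E1). simpl in A2, B1.
    destruct B1, Hyz. split; [exact A2|split; split; auto]. }
  exfalso. apply (refute_sound T le Pr Pa Pt env atP _ (refP i1 i2 Hi1 Hi2 N1 N2)); auto.
  apply fa_app; [exact F1|]. apply fa_app; [exact F2|]. apply fa_app; [|exact Hb].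
  apply finc_ok. unfold env, envl; simpl; auto.
Qed.

Lemma catom_ext (e1 e2 : nat -> T) atoms : (forall i, i < 11 -> e1 i = e2 i) ->
  forallb (fun t => let '(i,j,k) := t in (i <? 11) && (j <? 11) && (k <? 11)) atoms = true ->
  Forall (catom T le e1) atoms -> Forall (catom T le e2) atoms.
Proof.
  intros He Hb Ha. rewrite Forall_forall in *. rewrite forallb_forall in Hb.
  intros [[i j] k] Ht. specialize (Ha _ Ht). specialize (Hb _ Ht). simpl in *.
  repeat (apply andb_true_iff in Hb as [Hb ?]).
  repeat match goal with H : (_ <? _) = true |- _ => apply Nat.ltb_lt in H end.
  rewrite <- !He by auto. auto.
Qed.

Lemma complete x y z : lt T le c x /\ lt T le x d -> lt T le c y /\ lt T le y d ->
  lt T le c z /\ lt T le z d -> Low T le x y z ->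
  exists ws, length ws = 6 /\ Forall (catom T le (envl (x :: y :: z :: ws))) atomsL.
Proof.
  intros Hx Hy Hz HL.
  destruct checks_ok as [PA [PB [AA [AB [BA BB]]]]].
  set (bl := [c;d;x;y;z]).
  assert (HR : forall Rl bf, bcheck 5 Rl bf = true -> po_ok 11 Rl = true -> atoms_ok 11 Rl atomsL = true ->
     Forall (holds T le (fun i => nth i bl c)) bf ->
     exists ws, length ws = 6 /\ Forall (catom T le (envl (x :: y :: z :: ws))) atomsL).
  { intros Rl bf Hbc Hpo Hat Hf.
    destruct (bcheck_sound T le HP bl c Rl bf Hbc Hf) as [Hb1 Hb2].
    destruct (realize T le HP c 11 Rl bl atomsL Hpo ltac:(simpl; lia) Hb1 Hb2 Hat) as [g [Hg Ha]].
    exists (map g [5;6;7;8;9;10]). split; [reflexivity|].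
    apply (catom_ext g); auto.
    intros i Hi. do 5 (destruct i as [|i]; [rewrite Hg by (simpl; lia); reflexivity|]).
    do 6 (destruct i as [|i]; [reflexivity|]). lia. }
  destruct HL as [[Hxy [Hzx Hzy]]|[Hxz [Hyx Hyz]]].
  - apply (HR RA bfA); auto. unfold bfA, baseS.
    repeat apply fa_app; try apply flt_ok; try apply finc_ok; simpl; tauto.
  - apply (HR RB bfB); auto. unfold bfB, baseS.
    repeat apply fa_app; try apply flt_ok; try apply finc_ok; simpl; tauto.
Qed.
End Main2.


Definition tm (i : nat) : term :=
  match i with 0 => TConstC | 1 => TConstD | S (S k) => TVar k end.
Definition toatom (t : nat*nat*nat) : atom := let '(i,j,k) := t in ACycl (tm i) (tm j) (tm k).

Lemma eval_tm T (c d : T) (L : list T) i : i < 2 + length L ->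
  eval_term T c d L (tm i) = Some (nth i (c :: d :: L) c).
Proof.
  intro H. destruct i as [|[|k]]; simpl; auto.
  apply nth_error_nth'. simpl in H. lia.
Qed.

Lemma sat_toatom T le (c d : T) (L : list T) t :
  (let '(i,j,k) := t in i < 2 + length L /\ j < 2 + length L /\ k < 2 + length L) ->
  (sat_atom T le c d L (toatom t) <-> catom T le (fun i => nth i (c :: d :: L) c) t).
Proof.
  destruct t as [[i j] k]. intros [Hi [Hj Hk]]. simpl.
  rewrite !eval_tm by auto. split.
  - intros [a [b [e [E1 [E2 [E3 H]]]]]]. inversion E1; inversion E2; inversion E3; subst; auto.
  - intro H. do 3 eexists; repeat split; eauto.
Qed.

Lemma Low_transfer T le f (x y z : T) :
  (forall a b, In a [x;y;z] -> In b [x;y;z] -> (a = b <-> f a = f b) /\ (le a b <-> le (f a) (f b))) ->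
  (Low T le x y z <-> Low T le (f x) (f y) (f z)).
Proof.
  intro H.
  destruct (H x y) as [E1 L1]; simpl; auto.
  destruct (H y x) as [E2 L2]; simpl; auto.
  destruct (H x z) as [E3 L3]; simpl; auto.
  destruct (H z x) as [E4 L4]; simpl; auto.
  destruct (H y z) as [E5 L5]; simpl; auto.
  destruct (H z y) as [E6 L6]; simpl; auto.
  unfold Low, incomp2, incomp, lt. tauto.
Qed.

Theorem lemma62 (T : Type) (le : T -> T -> Prop) (HP : @random_poset T le)
  (c d : T) (Hcd : @lt T le c d) :
  @pp_interprets_Low T le c d.
Proof.
  destruct HP as [HPO [[fe Hfe] HR]] eqn:EHP.
  set (I := fun xs : list T => Iso T le c d fe (hd c xs)).
  set (Dom := fun xs : list T => Cycl T le c (hd c xs) d).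
  assert (DomS : forall x, Cycl T le c x d <-> InS T le c d x).
  { intro x. rewrite (cycl_S T le HP c d Hcd). reflexivity. }
  assert (Pres := fun x y => Iso_pres T le HP c d Hcd fe Hfe x y).
  exists 1. split; [lia|]. exists Dom, I. split; [|split; [|split]].
  -
    exists 0, [ACycl TConstC (TVar 0) TConstD]. intros xs Hl.
    destruct xs as [|x [|]]; simpl in Hl; try lia.
    split.
    + intro H. exists []. split; auto. constructor; [|constructor].
      simpl. do 3 eexists; repeat split; eauto.
    + intros [ys [_ H]]. inversion H as [|? ? H1 _]; subst.
      destruct H1 as [a [b [e [E1 [E2 [E3 H1]]]]]]. simpl in E1, E2, E3.
      inversion E1; inversion E2; inversion E3; subst. exact H1.
  - intro y. destruct (Iso_surj T le HP c d Hcd fe Hfe y) as [x [Hx Ex]].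
    exists [x]. split; auto. split; auto. unfold Dom. simpl. apply DomS; auto.
  - exists 0, [ACycl TConstC (TVar 0) TConstD; ACycl TConstC (TVar 1) TConstD; AEq (TVar 0) (TVar 1)].
    intros zs Hl. destruct zs as [|x [|y [|]]]; simpl in Hl; try lia.
    unfold Dom, I. simpl. split.
    + intros [Hx [Hy E]]. exists []. split; auto.
      apply DomS in Hx, Hy. apply (Pres x y Hx Hy) in E. subst.
      apply DomS in Hx.
      repeat constructor; simpl; do 3 eexists; repeat split; eauto.
      Unshelve. all: exact c.
    + intros [ys [_ H]].
      inversion H as [|? ? H1 H']; subst. inversion H' as [|? ? H2 H'']; subst.
      inversion H'' as [|? ? H3 _]; subst.
      destruct H1 as [a1 [b1 [e1 [E1 [E2 [E3 H1]]]]]]. simpl in E1, E2, E3.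
      inversion E1; inversion E2; inversion E3; subst.
      destruct H2 as [a2 [b2 [e2 [F1 [F2 [F3 H2]]]]]]. simpl in F1, F2, F3.
      inversion F1; inversion F2; inversion F3; subst.
      destruct H3 as [a3 [b3 [F4 [F5 E]]]]. simpl in F4, F5. inversion F4; inversion F5; subst.
      auto.
  - exists 6, (map toatom atomsL). intros zs Hl.
    destruct zs as [|x [|y [|z [|]]]]; simpl in Hl; try lia.
    unfold Dom, I. simpl.
    assert (Hconv : forall ws, length ws = 6 ->
      (Forall (sat_atom T le c d ([x;y;z] ++ ws)) (map toatom atomsL) <->
       Forall (catom T le (envl T c d (x :: y :: z :: ws))) atomsL)).
    { intros ws Hws. rewrite Forall_map. split; intro H; rewrite Forall_forall in *;
      intros t Ht; specialize (H t Ht);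
      (assert (B : let '(i,j,k) := t in i < 2 + length ([x;y;z] ++ ws) /\ j < 2 + length ([x;y;z] ++ ws) /\
                  k < 2 + length ([x;y;z] ++ ws))
       by (simpl; rewrite Hws; revert Ht; unfold atomsL, atS, atG, atP; simpl;
           intros Ht; repeat destruct Ht as [<-|Ht]; [..|destruct Ht]; lia));
      [apply (sat_toatom T le c d _ t B) in H; exact H | apply (sat_toatom T le c d _ t B); exact H]. }
    split.
    + intros [Hx [Hy [Hz HL]]].
      apply DomS in Hx, Hy, Hz.
      assert (Ht : Low T le x y z <-> Low T le (Iso T le c d fe x) (Iso T le c d fe y) (Iso T le c d fe z)).
      { apply Low_transfer.
        intros a b Ha Hb. apply Pres; simpl in Ha, Hb;
        repeat destruct Ha as [<-|Ha]; repeat destruct Hb as [<-|Hb]; try tauto. }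
      assert (HL' : Low T le x y z) by (apply Ht; auto).
      destruct (complete T le HP c d Hcd x y z Hx Hy Hz HL') as [ws [Hws Ha]].
      exists ws. split; auto. apply Hconv; auto.
    + intros [ws [Hws H]]. apply Hconv in H; auto.
      pose proof (sound T le HP c d Hcd x y z ws H) as HL.
      unfold atomsL in H. apply Forall_app in H as [HS _].
      inversion HS as [|? ? Hx HS1]; subst. inversion HS1 as [|? ? Hy HS2]; subst.
      inversion HS2 as [|? ? Hz _]; subst. simpl in Hx, Hy, Hz.
      split; [exact Hx|split; [exact Hy|split; [exact Hz|]]].
      apply DomS in Hx, Hy, Hz.
      assert (Ht : Low T le x y z <-> Low T le (Iso T le c d fe x) (Iso T le c d fe y) (Iso T le c d fe z)).
      { apply Low_transfer.
        intros a b Ha Hb. apply Pres; simpl in Ha, Hb;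
        repeat destruct Ha as [<-|Ha]; repeat destruct Hb as [<-|Hb]; try tauto. }
      apply Ht; auto.
Qed.
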